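(* Let $f,g:2^{[n]}\to\mathbb N$ be monotone (decreasing) functions with $|f|\le|g|$. Then there is a function $p:2^{[n]}\times 2^{[n]}\to\mathbb N$ such that (i) $p(X,Y)\neq 0$ only if $X,Y\subset[n]$ are disjoint; (ii) $|p|=|f|$; (iii) $\sum_{X\subset[n]}p(X,Y)\le g(Y)$ for every $Y\subset[n]$, and $\sum_{Y\subset[n]}p(X,Y)=f(X)$ for every $X\subset[n]$.
   Context: $\mathbb N$ includes $0$; $[n]=\{1,\dots,n\}$. A function $f:2^{[n]}\to\mathbb N$ is monotone (decreasing) if $f(A)\le f(A\setminus\{i\})$ for every set $A\subset[n]$ and element $i$. For $f:2^{[n]}\to\mathbb N$, $|f|=\sum_{X\subset[n]}f(X)$; for $p:2^{[n]}\times2^{[n]}\to\mathbb N$, $|p|=\sum_{X,Y\subset[n]}p(X,Y)$. *)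

(* Defs.v *)
From mathcomp Require Import all_boot.
Set Implicit Arguments. Unset Strict Implicit. Unset Printing Implicit Defensive.

(* Subsets of [n] = {1..n} are modelled as {set 'I_n} (n elements). *)

Definition monotone_dec (n : nat) (f : {set 'I_n} -> nat) : Prop :=
  forall (A : {set 'I_n}) (i : 'I_n), f A <= f (A :\ i).

Definition fsize (n : nat) (f : {set 'I_n} -> nat) : nat :=
  \sum_(X : {set 'I_n}) f X.

Definition psize (n : nat) (p : {set 'I_n} -> {set 'I_n} -> nat) : nat :=
  \sum_(X : {set 'I_n}) \sum_(Y : {set 'I_n}) p X Y.

(* Main.v *)
Require Import Defs.
From mathcomp Require Import all_boot.
From mathcomp Require Import zify.
Set Implicit Arguments. Unset Strict Implicit. Unset Printing Implicit Defensive.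

Lemma mono_sub n (f : {set 'I_n} -> nat) :
  monotone_dec f -> forall X Y : {set 'I_n}, X \subset Y -> f Y <= f X.
Proof.
move=> hf X Y; move: {2}#|Y :\: X| (erefl #|Y :\: X|) => k.
elim: k Y => [|k IH] Y Hk sXY.
  have /eqP : Y :\: X = set0 by apply/eqP; rewrite -cards_eq0 Hk.
  rewrite setD_eq0 => sYX.
  by rewrite (eqP (_ : Y == X)) // eqEsubset sYX sXY.
have : 0 < #|Y :\: X| by rewrite Hk.
case/card_gt0P => i; rewrite inE => /andP [iX iY].
apply: leq_trans (hf Y i) _; apply: IH.
  have -> : (Y :\ i) :\: X = (Y :\: X) :\ i.
    by apply/setP => z; rewrite !inE; case: (z == i); case: (z \in X).
  by move: (cardsD1 i (Y :\: X)); rewrite Hk !inE iX iY /= add1n => -[].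
apply/subsetP => z zX; rewrite !inE (subsetP sXY) // andbT.
by apply/eqP => e; rewrite -e zX in iX.
Qed.

Lemma sum_split n (a : 'I_n) (B : {set 'I_n}) (F : {set 'I_n} -> nat) :
  a \notin B ->
  \sum_(X : {set 'I_n} | X \subset a |: B) F X =
  \sum_(X : {set 'I_n} | X \subset B) F X + \sum_(X : {set 'I_n} | X \subset B) F (a |: X).
Proof.
move=> aB; rewrite (bigID (fun X : {set 'I_n} => a \in X)) /= addnC; congr (_ + _).
  apply: eq_bigl => X; case aX: (a \in X); rewrite /= ?andbT ?andbF.
    apply/esym/negbTE; apply: contraNN aB => /subsetP; exact.
  apply/idP/idP => /subsetP s; apply/subsetP => z zX.
    by move: (s z zX); rewrite !inE; case: eqP => // e; rewrite -e zX in aX.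
  by rewrite !inE s ?orbT.
rewrite (reindex_onto (fun X => a |: X) (fun X => X :\ a)) /=; last first.
  by move=> X /andP [_ aX]; rewrite setD1K.
apply: eq_bigl => X; rewrite setU11 andbT.
apply/idP/idP.
  case/andP => /subsetP s /eqP e; apply/subsetP => z zX.
  have : z \in a |: B by apply: s; rewrite !inE zX orbT.
  rewrite !inE; case: eqP => //= ez; move: zX; rewrite ez -e !inE eqxx //.
move=> sXB; have aX : a \notin X by apply: contraNN aB => /(subsetP sXB).
rewrite setUS //=; apply/eqP/setP => z; rewrite !inE.
by case: (z =P a) => [->|_] /=; rewrite ?(negbTE aX).
Qed.

Lemma harris n : forall k (A : {set 'I_n}) (phi psi : {set 'I_n} -> nat),
  #|A| = k ->
  (forall X Y : {set 'I_n}, X \subset Y -> phi Y <= phi X) ->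
  (forall X Y : {set 'I_n}, X \subset Y -> psi X <= psi Y) ->
  2 ^ k * \sum_(X : {set 'I_n} | X \subset A) phi X * psi X <=
  (\sum_(X : {set 'I_n} | X \subset A) phi X) * (\sum_(X : {set 'I_n} | X \subset A) psi X).
Proof.
elim => [|k IH] A phi psi Hk hphi hpsi.
  move/eqP: Hk; rewrite cards_eq0 => /eqP ->.
  have e0 : forall F : {set 'I_n} -> nat, \sum_(X : {set 'I_n} | X \subset set0) F X = F set0.
    by move=> F; apply: (big_pred1 set0) => X; rewrite subset0.
  by rewrite !e0 expn0 mul1n.
have : 0 < #|A| by rewrite Hk.
case/card_gt0P => a aA.
have aB : a \notin A :\ a by rewrite !inE eqxx.
have HB : #|A :\ a| = k by move: (cardsD1 a A); rewrite Hk aA add1n => -[].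
rewrite -(setD1K aA) !sum_split //.
have h1 := IH _ _ _ HB hphi hpsi.
have h2 := IH _ (fun X => phi (a |: X)) (fun X => psi (a |: X)) HB
  (fun X Y s => hphi _ _ (setUS [set a] s)) (fun X Y s => hpsi _ _ (setUS [set a] s)).
simpl in h2.
have hP : \sum_(X : {set 'I_n} | X \subset A :\ a) phi (a |: X) <= \sum_(X : {set 'I_n} | X \subset A :\ a) phi X.
  by apply: leq_sum => X _; apply: hphi; apply: subsetUr.
have hQ : \sum_(X : {set 'I_n} | X \subset A :\ a) psi X <= \sum_(X : {set 'I_n} | X \subset A :\ a) psi (a |: X).
  by apply: leq_sum => X _; apply: hpsi; apply: subsetUr.
move: h1 h2 hP hQ.
set S0 := \sum_(X | _) phi X * psi X.
set S1 := \sum_(X | _) phi (a |: X) * psi (a |: X).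
set P0 := \sum_(X | _) phi X.
set P1 := \sum_(X | _) phi (a |: X).
set Q0 := \sum_(X | _) psi X.
set Q1 := \sum_(X | _) psi (a |: X).
rewrite expnS => h1 h2 hP hQ.
clearbody S0 S1 P0 P1 Q0 Q1; move: (2 ^ k) h1 h2 => K h1 h2.
apply: (@leq_trans (2 * (P0 * Q0 + P1 * Q1))).
  by rewrite -mulnA leq_mul2l /= mulnDr leq_add.
have [u ->] : exists u, P0 = P1 + u by exists (P0 - P1); rewrite subnKC.
have [v ->] : exists v, Q1 = Q0 + v by exists (Q1 - Q0); rewrite subnKC.
have -> : (P1 + u + P1) * (Q0 + (Q0 + v)) = 2 * ((P1 + u) * Q0 + P1 * (Q0 + v)) + u * v by rewrite !mulnDl !mulnDr !mul2n -!addnn; lia.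
exact: leq_addr.
Qed.

Lemma sum_sub (T : finType) (P Q : pred T) (F : T -> nat) :
  (forall x, P x -> Q x) -> \sum_(x | P x) F x <= \sum_(x | Q x) F x.
Proof.
move=> PQ; rewrite [X in _ <= X](bigID P) /=.
apply: leq_trans (leq_addr _ _); rewrite (eq_bigl P) // => x.
by case Px: (P x); rewrite ?andbT ?andbF // PQ.
Qed.

Lemma sum_delta (T : finType) (P : pred T) (F : T -> nat) x0 :
  \sum_(x | P x) (F x + (x == x0)) = \sum_(x | P x) F x + P x0.
Proof.
rewrite big_split /=; congr (_ + _).
case Px0: (P x0).
  by rewrite (bigD1 x0) //= eqxx big1 // => x /andP [_ /negbTE ->].
by rewrite big1 // => x Px; case: eqP => // e; rewrite e Px0 in Px.
Qed.

Lemma le_sum1 (T : finType) (F : T -> nat) x : F x <= \sum_y F y.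
Proof. by rewrite (bigD1 x) //= leq_addr. Qed.

Section Hall.
Variables (T : finType) (E : T -> T -> bool).

Definition nb (S : {set T}) : {set T} := [set y | [exists x in S, E x y]].

Lemma hall : forall m (f g : T -> nat), \sum_x f x <= m ->
  (forall S : {set T}, \sum_(x in S) f x <= \sum_(y in nb S) g y) ->
  exists p : T -> T -> nat,
   [/\ (forall x y, p x y != 0 -> E x y),
       (forall y, \sum_x p x y <= g y) &
       (forall x, \sum_y p x y = f x)].
Proof.
elim => [|m IH] f g Hm Hh.
  exists (fun _ _ => 0); split => // [y|x]; first by rewrite big1.
  rewrite big1 //; apply/esym; apply/eqP; rewrite -leqn0.
  exact: leq_trans (le_sum1 f x) Hm.
case: (leqP (\sum_x f x) m) => [Hle|Hgt]; first exact: IH.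
have Htot : \sum_x f x = m.+1 by apply/eqP; rewrite eqn_leq Hm Hgt.
case: (boolP [exists S : {set T}, [&& 0 < \sum_(x in S) f x,
          \sum_(x in S) f x < \sum_x f x &
          \sum_(x in S) f x == \sum_(y in nb S) g y]]).
  case/existsP => S /and3P [H0 H1 /eqP Ht].
  pose f1 x := if x \in S then f x else 0.
  pose g1 y := if y \in nb S then g y else 0.
  pose f2 x := if x \in S then 0 else f x.
  pose g2 y := if y \in nb S then 0 else g y.
  have [p1 [s1 c1 r1]] : exists p : T -> T -> nat,
   [/\ (forall x y, p x y != 0 -> E x y),
       (forall y, \sum_x p x y <= g1 y) &
       (forall x, \sum_y p x y = f1 x)].
    apply: (IH f1 g1).
      have -> : \sum_x f1 x = \sum_(x in S) f x by rewrite [RHS]big_mkcond.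
      by rewrite -ltnS -Htot.
    move=> R.
    have -> : \sum_(x in R) f1 x = \sum_(x in R :&: S) f x.
      by rewrite /f1 -big_mkcondr; apply: eq_bigl => x; rewrite inE.
    apply: leq_trans (Hh _) _.
    have -> : \sum_(y in nb R) g1 y = \sum_(y | (y \in nb R) && (y \in nb S)) g y.
      by rewrite big_mkcondr.
    apply: sum_sub => y; rewrite !inE => /existsP [x /andP [/[!inE] /andP [xR xS] Exy]].
    by apply/andP; split; apply/existsP; exists x; rewrite ?xR ?xS.
  have [p2 [s2 c2 r2]] : exists p : T -> T -> nat,
   [/\ (forall x y, p x y != 0 -> E x y),
       (forall y, \sum_x p x y <= g2 y) &
       (forall x, \sum_y p x y = f2 x)].
    apply: (IH f2 g2).
      have : \sum_x f x = \sum_(x in S) f x + \sum_x f2 x.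
        rewrite [in LHS](bigID (mem S)) /=; congr (_ + _); rewrite big_mkcond; apply: eq_bigr => x _; rewrite /f2; by case: (x \in S).
      rewrite Htot => e; move: H0; rewrite -ltnS; lia.
    move=> R.
    have e1 : \sum_(x in R) f2 x = \sum_(x | (x \in R) && (x \notin S)) f x.
      by rewrite big_mkcondr; apply: eq_bigr => x _; rewrite /f2; case: (x \in S).
    have e2 : \sum_(y in nb R) g2 y = \sum_(y | (y \in nb R) && (y \notin nb S)) g y.
      by rewrite big_mkcondr; apply: eq_bigr => y _; rewrite /g2; case: (y \in nb S).
    have h := Hh (R :|: S).
    rewrite (bigID (mem S)) /= in h.
    have eA : \sum_(i in R :|: S | i \in S) f i = \sum_(i in S) f i.
      by apply: eq_bigl => x; rewrite !inE; case: (x \in S); rewrite ?orbT ?andbT ?andbF.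
    have eB : \sum_(i in R :|: S | i \notin S) f i = \sum_(i in R | i \notin S) f i.
      by apply: eq_bigl => x; rewrite !inE; case: (x \in S); rewrite ?orbT ?orbF ?andbT ?andbF.
    rewrite eA eB in h.
    rewrite [X in _ <= X](bigID (mem (nb S))) /= in h.
    have h3 : \sum_(y | (y \in nb (R :|: S)) && (y \in nb S)) g y <= \sum_(y in nb S) g y.
      by apply: sum_sub => y /andP [].
    have h4 : \sum_(y | (y \in nb (R :|: S)) && (y \notin nb S)) g y <= \sum_(y | (y \in nb R) && (y \notin nb S)) g y.
      apply: sum_sub => y /andP [] /[!inE] /existsP [x /andP [/[!inE] /orP [xR|xS] Exy]] ynS.
        by apply/andP; split => //; apply/existsP; exists x; rewrite xR.
      by move: ynS => /existsPn /(_ x); rewrite xS Exy.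
    rewrite e1 e2; lia.
  exists (fun x y => p1 x y + p2 x y); split.
  - move=> x y; case: (p1 x y =P 0) => [->|/eqP]; first exact: s2.
    by move=> h _; exact: s1.
  - move=> y; rewrite big_split /=.
    have -> : g y = g1 y + g2 y by rewrite /g1 /g2; case: (y \in nb S); rewrite ?addn0.
    exact: leq_add.
  - move=> x; rewrite big_split /= r1 r2 /f1 /f2; by case: (x \in S); rewrite ?addn0.
move/existsPn => Hnt.
case: (pickP (fun x => 0 < f x)) => [x0 Hx0|H0]; last first.
  by move: Htot; rewrite big1 // => x; move: (H0 x) => /= /negbT; rewrite -eqn0Ngt => /eqP.
have hx0 := Hh [set x0]; rewrite big_set1 in hx0.
case: (pickP (fun y => (y \in nb [set x0]) && (0 < g y))) => [y0 /andP [Hy0 gy0]|H0]; last first.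
  move: hx0; rewrite big1; first by rewrite leqn0 => /eqP e; rewrite e in Hx0.
  by move=> y yN; move: (H0 y); rewrite yN /= => /negbT; rewrite -eqn0Ngt => /eqP.
have Exy0 : E x0 y0.
  by move: Hy0; rewrite inE => /existsP [x /andP [/[!inE] /eqP -> ]].
pose f' x := f x - (x == x0).
pose g' y := g y - (y == y0).
have ef : forall x, f x = f' x + (x == x0).
  by move=> x; rewrite /f'; case: eqP => [->|]; rewrite ?subn0 ?addn0 // subnK.
have eg : forall y, g y = g' y + (y == y0).
  by move=> y; rewrite /g'; case: eqP => [->|]; rewrite ?subn0 ?addn0 // subnK.
have sf : forall P : pred T, \sum_(x | P x) f x = \sum_(x | P x) f' x + P x0.
  by move=> P; rewrite -sum_delta; apply: eq_bigr => x _; rewrite -ef.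
have sg : forall P : pred T, \sum_(y | P y) g y = \sum_(y | P y) g' y + P y0.
  by move=> P; rewrite -sum_delta; apply: eq_bigr => y _; rewrite -eg.
have [p [s c r]] : exists p : T -> T -> nat,
   [/\ (forall x y, p x y != 0 -> E x y),
       (forall y, \sum_x p x y <= g' y) &
       (forall x, \sum_y p x y = f' x)].
  apply: (IH f' g').
    by move: (sf predT); rewrite Htot /= addn1 => -[<-].
  move=> R; have hR := Hh R.
  move: hR; rewrite (sf (mem R)) (sg (mem (nb R))) /=.
  case xR: (x0 \in R) => /=.
    case: (y0 \in nb R) => /=; lia.
  rewrite addn0 => _.
  have hlt : \sum_(x in R) f x < \sum_x f x.
    rewrite (bigID (mem R) predT) /= -addn1 leq_add2l.
    apply: leq_trans Hx0 _.
    by rewrite (bigD1 x0) /=; [apply: leq_addr | rewrite xR].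
  have sfR : \sum_(x in R) f x = \sum_(x in R) f' x by rewrite (sf (fun x => x \in R)) /= xR addn0.
  move: (Hnt R); rewrite hlt /=.
  case: (posnP (\sum_(x in R) f x)) => [|pos]; first by rewrite sfR => -> _.
  move=> /= ne.
  have hle := Hh R.
  have : \sum_(x in R) f x < \sum_(y in nb R) g y by rewrite ltn_neqAle ne hle.
  rewrite sfR (sg (mem (nb R))) /=; case: (y0 \in nb R) => /=; lia.
exists (fun x y => p x y + ((x == x0) && (y == y0))); split.
- move=> x y; rewrite addn_eq0 negb_and => /orP [/s //|].
  case: (x =P x0) => [->|_]; case: (y =P y0) => [->|_] //=; rewrite ?andbF //.
- move=> y; case: (y =P y0) => [->|ne].
    under eq_bigr do rewrite andbT.
    by rewrite (sum_delta predT) /= addn1 eg eqxx addn1 ltnS c.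
  have ne' : (y == y0) = false by apply/eqP.
  rewrite eg ne' addn0; apply: leq_trans (c y); apply: eq_leq.
  by apply: eq_bigr => x _; rewrite andbF addn0.
- move=> x; case: (x =P x0) => [->|ne].
    by rewrite (sum_delta predT (p x0) y0) r ef eqxx.
  have ne' : (x == x0) = false by apply/eqP.
  rewrite ef ne' addn0 -r.
  by apply: eq_bigr => y _; rewrite /= addn0.
Qed.
End Hall.

Lemma sum_ind (T : finType) (A : {pred T}) (F : T -> nat) :
  \sum_x (x \in A) * F x = \sum_(x in A) F x.
Proof.
by rewrite [RHS]big_mkcond; apply: eq_bigr => x _; case: (x \in A); rewrite ?mul1n ?mul0n.
Qed.

Theorem theorem2p1 (n : nat) (f g : {set 'I_n} -> nat) :
  monotone_dec f -> monotone_dec g -> fsize f <= fsize g ->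
  exists p : {set 'I_n} -> {set 'I_n} -> nat,
    [/\ (forall X Y : {set 'I_n}, p X Y != 0 -> [disjoint X & Y]),
        psize p = fsize f,
        (forall Y : {set 'I_n}, \sum_(X : {set 'I_n}) p X Y <= g Y) &
        (forall X : {set 'I_n}, \sum_(Y : {set 'I_n}) p X Y = f X)].
Proof.
move=> hf hg hfg.
have mf := mono_sub hf; have mg := mono_sub hg.
have Hcond : forall S : {set {set 'I_n}},
    \sum_(X in S) f X <= \sum_(Y in nb (fun X Y : {set 'I_n} => [disjoint X & Y]) S) g Y.
  move=> S; set D := nb _ S.
  have Ddown : forall Y Y' : {set 'I_n}, Y' \subset Y -> Y \in D -> Y' \in D.
    move=> Y Y' sub; rewrite !inE => /existsP [X /andP [XS dXY]].
    apply/existsP; exists X; rewrite XS /=.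
    rewrite disjoints_subset in dXY; rewrite disjoints_subset.
    by apply: (subset_trans dXY); rewrite setCS.
  have step1 : \sum_(X in S) f X <= \sum_(X | ~: X \in D) f X.
    apply: sum_sub => X XS; rewrite inE; apply/existsP; exists X.
    by rewrite XS /= disjoints_subset setCK.
  have step2 : \sum_(X | ~: X \in D) f X = \sum_(Y in D) f (~: Y).
    by rewrite (reindex_inj (@setC_inj _)) /=; apply: eq_bigl => Y; rewrite setCK.
  apply: leq_trans step1 _; rewrite step2.
  have eT : forall F : {set 'I_n} -> nat, \sum_(Y : {set 'I_n} | Y \subset setT) F Y = \sum_Y F Y.
    by move=> F; apply: eq_bigl => Y; rewrite subsetT.
  have m1 : forall X Y : {set 'I_n}, X \subset Y -> nat_of_bool (Y \in D) <= nat_of_bool (X \in D).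
    by move=> X Y s; case YD: (Y \in D) => //=; rewrite (Ddown Y X s YD).
  have m2 : forall X Y : {set 'I_n}, X \subset Y -> f (~: X) <= f (~: Y).
    by move=> X Y s; apply: mf; rewrite setCS.
  have m3 : forall X Y : {set 'I_n}, X \subset Y -> nat_of_bool (X \in ~: D) <= nat_of_bool (Y \in ~: D).
    move=> X Y s; case XD: (X \in ~: D) => //=; rewrite in_setC.
    case YD: (Y \in D) => //=.
    by move: XD; rewrite in_setC (Ddown Y X s YD).
  have h3 := @harris n _ setT (fun Y => nat_of_bool (Y \in D)) (fun Y => f (~: Y)) (erefl _) m1 m2.
  have h4 := @harris n _ setT g (fun Y => nat_of_bool (Y \in ~: D)) (erefl _) mg m3.
  rewrite !eT /= !sum_ind in h3 h4.
  have c1 : \sum_Y nat_of_bool (Y \in D) = #|D|.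
    by rewrite -sum1_card -sum_ind; apply: eq_bigr => Y _; rewrite muln1.
  have c2 : \sum_Y nat_of_bool (Y \in ~: D) = #|~: D|.
    by rewrite -sum1_card -sum_ind; apply: eq_bigr => Y _; rewrite muln1.
  have s4 : \sum_Y g Y * nat_of_bool (Y \in ~: D) = \sum_(Y in ~: D) g Y.
    by rewrite -sum_ind; apply: eq_bigr => Y _; rewrite mulnC.
  rewrite c1 in h3; rewrite c2 s4 in h4.
  have ef : \sum_Y f (~: Y) = \sum_X f X.
    by rewrite [RHS](reindex_inj (@setC_inj _)).
  rewrite ef in h3.
  have eg : \sum_Y g Y = \sum_(Y in D) g Y + \sum_(Y in ~: D) g Y.
    rewrite [LHS](bigID (mem D)) /=; congr (_ + _); apply: eq_bigl => Y; by rewrite ?in_setC.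
  have ecard : #|D| + #|~: D| = 2 ^ #|[set: 'I_n]|.
    by rewrite cardsC -cardsT -powersetT card_powerset.
  move: hfg; rewrite /fsize eg => hfg.
  move: h3 h4 hfg ecard; rewrite eg.
  have : 0 < 2 ^ #|[set: 'I_n]| by rewrite expn_gt0.
  move: (2 ^ _) => N.
  move: (\sum_(Y in D) f (~: Y)) (\sum_X f X) (\sum_(Y in D) g Y) (\sum_(Y in ~: D) g Y) #|D| #|~: D|.
  move=> a F b c d e Npos h3 h4 hfg eN.
  have h5 : N * a <= d * (b + c) := leq_trans h3 (leq_mul (leqnn _) hfg).
  have h6 : N * a + N * c <= N * b + N * c.
    apply: leq_trans (leq_add h5 h4) _.
    by rewrite [(b + c) * e]mulnC -mulnDl eN mulnDr.
  by rewrite leq_add2r leq_pmul2l in h6.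
have [p [s c r]] := hall (leqnn (\sum_X f X)) Hcond.
exists p; split => //.
by rewrite /psize /fsize; apply: eq_bigr => X _; exact: r.
Qed.
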